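(* Let $N\ge1$ and $\eta\in[0,1]$. For bit strings $l_y\in\{0,1\}^N$ with $l_y^1=0$, $y=1,\dots,2^{N-1}$, consider the quantum functional $$(\mathcal B_N)_Q=\eta\sum_{y=1}^{2^{N-1}}\Big|\sum_{x=1}^N(-1)^{l_y^x}\,\mathrm{Tr}\big[\rho_{AB}\,(A_x\otimes B_y)\big]\Big|,$$ where $\rho_{AB}$ is a density operator on $\mathcal H_A\otimes\mathcal H_B$ (finite-dimensional Hilbert spaces of arbitrary dimension) and $A_x$, $B_y$ are self-adjoint operators with $A_x^2=\mathbb I$, $B_y^2=\mathbb I$. Then the supremum of $(\mathcal B_N)_Q$ over all such states and observables equals $\eta\,2^{N-1}\sqrt N$, and this value is attained when $A_1,\dots,A_N$ pairwise anticommute, i.e. $A_xA_{x'}+A_{x'}A_x=2\delta_{x,x'}\mathbb I$.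
   Context: Alice's unsharp measurements are the POVMs $\{E_{\pm|x}=\tfrac12(\mathbb I\pm\eta A_x)\}$, so that the effective observable is $\eta A_x$; $\eta$ is the unsharpness parameter. *)

(* Defs.v *)
(* Scalars: an arbitrary numClosedFieldType C (e.g. the
   complex numbers); operators on finite-dimensional spaces are square
   matrices, H_A (x) H_B = C^(dA*dB) with the Kronecker product tensmx. *)
From HB Require Import structures.
From mathcomp Require Import all_boot all_order all_algebra.
From mathcomp Require Import sesquilinear.
From mathcomp.real_closed Require Import mxtens.
Set Implicit Arguments. Unset Strict Implicit. Unset Printing Implicit Defensive.
Import Order.TTheory GRing.Theory Num.Theory.
Local Open Scope ring_scope.

Section Defs.
Variable C : numClosedFieldType.

Definition adjmx m n (M : 'M[C]_(m, n)) : 'M[C]_(n, m) := map_mx Num.conj M^T.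

Definition selfadj n (M : 'M[C]_n) : Prop := adjmx M = M.

Definition psd n (M : 'M[C]_n) : Prop :=
  selfadj M /\ forall v : 'cV[C]_n, 0 <= (adjmx v *m M *m v) 0 0.

Definition density n (rho : 'M[C]_n) : Prop := psd rho /\ \tr rho = 1.

Definition observable n (M : 'M[C]_n) : Prop := selfadj M /\ M *m M = 1%:M.

(* bit strings l in {0,1}^N (true = 1) with first bit l^1 = 0 *)
Definition firstbit0 N (l : {ffun 'I_N -> bool}) : bool :=
  [forall i : 'I_N, (nat_of_ord i == 0%N) ==> ~~ l i].

(* the quantum functional (B_N)_Q for unsharpness eta; the 2^(N-1)
   measurements B_y of Bob are indexed by their bit strings l_y *)
Definition BNQ N dA dB (eta : C) (rho : 'M[C]_(dA * dB))
    (A : 'I_N -> 'M[C]_dA) (B : {ffun 'I_N -> bool} -> 'M[C]_dB) : C :=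
  eta * \sum_(l : {ffun 'I_N -> bool} | firstbit0 l)
          `| \sum_(x < N) (-1) ^+ l x * \tr (rho *m tensmx (A x) (B l)) |.
End Defs.

(* Main.v *)
Require Import Defs.
From HB Require Import structures.
From mathcomp Require Import all_boot all_order all_algebra.
From mathcomp Require Import sesquilinear.
From mathcomp.real_closed Require Import mxtens.
From mathcomp Require Import ring.
Import Order.TTheory GRing.Theory Num.Theory.
Local Open Scope ring_scope.

Module Helpers.
Set Implicit Arguments. Unset Strict Implicit. Unset Printing Implicit Defensive.

Section H.
Variable C : numClosedFieldType.

Lemma adjmxM m n p (A : 'M[C]_(m, n)) (B : 'M[C]_(n, p)) :
  adjmx (A *m B) = adjmx B *m adjmx A.
Proof. by rewrite /adjmx trmx_mul map_mxM. Qed.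

Lemma adjmxK m n (A : 'M[C]_(m, n)) : adjmx (adjmx A) = A.
Proof. by apply/matrixP => i j; rewrite !mxE conjCK. Qed.

Lemma adjmxD m n (A B : 'M[C]_(m, n)) : adjmx (A + B) = adjmx A + adjmx B.
Proof. by apply/matrixP => i j; rewrite !mxE rmorphD. Qed.

Lemma adjmxN m n (A : 'M[C]_(m, n)) : adjmx (- A) = - adjmx A.
Proof. by apply/matrixP => i j; rewrite !mxE rmorphN. Qed.

Lemma adjmxZ m n a (A : 'M[C]_(m, n)) : adjmx (a *: A) = a^* *: adjmx A.
Proof. by apply/matrixP => i j; rewrite !mxE rmorphM. Qed.

Lemma adjmx1 n : adjmx (1%:M : 'M[C]_n) = 1%:M.
Proof. by rewrite /adjmx trmx1 map_mx1. Qed.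

Lemma adjmx_sum m n I (r : seq I) (P : pred I) (F : I -> 'M[C]_(m, n)) :
  adjmx (\sum_(i <- r | P i) F i) = \sum_(i <- r | P i) adjmx (F i).
Proof.
apply: (big_morph _ (@adjmxD _ _)).
by apply/matrixP => i j; rewrite !mxE conjC0.
Qed.

Lemma adjmx_tens m n p q (A : 'M[C]_(m, n)) (B : 'M[C]_(p, q)) :
  adjmx (A *t B) = adjmx A *t adjmx B.
Proof. by rewrite /adjmx trmx_tens map_mxT. Qed.

Lemma tensmxDl m n p q (A B : 'M[C]_(m, n)) (M : 'M[C]_(p, q)) :
  (A + B) *t M = A *t M + B *t M.
Proof. by apply/matrixP => i j; rewrite !mxE mulrDl. Qed.

Lemma tensmxDr m n p q (A : 'M[C]_(m, n)) (M N : 'M[C]_(p, q)) :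
  A *t (M + N) = A *t M + A *t N.
Proof. by apply/matrixP => i j; rewrite !mxE mulrDr. Qed.

Lemma tensmxZl m n p q a (A : 'M[C]_(m, n)) (M : 'M[C]_(p, q)) :
  (a *: A) *t M = a *: (A *t M).
Proof. by apply/matrixP => i j; rewrite !mxE mulrA. Qed.

Lemma tensmxZr m n p q a (A : 'M[C]_(m, n)) (M : 'M[C]_(p, q)) :
  A *t (a *: M) = a *: (A *t M).
Proof. by apply/matrixP => i j; rewrite !mxE mulrCA. Qed.

Lemma tensmxNl m n p q (A : 'M[C]_(m, n)) (M : 'M[C]_(p, q)) :
  (- A) *t M = - (A *t M).
Proof. by apply/matrixP => i j; rewrite !mxE mulNr. Qed.

Lemma tensmxNr m n p q (A : 'M[C]_(m, n)) (M : 'M[C]_(p, q)) :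
  A *t (- M) = - (A *t M).
Proof. by apply/matrixP => i j; rewrite !mxE mulrN. Qed.

Lemma tensmx_suml m n p q I (r : seq I) (P : pred I) (F : I -> 'M[C]_(m, n))
   (M : 'M[C]_(p, q)) :
  (\sum_(i <- r | P i) F i) *t M = \sum_(i <- r | P i) (F i *t M).
Proof.
rewrite (big_morph (fun X => X *t M) (fun A B => tensmxDl A B M) (tens0mx M)) //.
Qed.

Lemma tens11 m n : (1%:M : 'M[C]_m) *t (1%:M : 'M[C]_n) = 1%:M.
Proof.
apply/matrixP => i j.
case: (mxtens_indexP i) => i0 i1; case: (mxtens_indexP j) => j0 j1.
rewrite tensmxE !mxE (inj_eq (can_inj (@mxtens_indexK _ _))) xpair_eqE.
by case: (i0 == j0); case: (i1 == j1); rewrite /= ?mulr1 ?mul0r ?mulr0.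
Qed.

Lemma mxtrace_tens m n (A : 'M[C]_m) (B : 'M[C]_n) :
  \tr (A *t B) = \tr A * \tr B.
Proof.
rewrite /mxtrace mulr_sum; apply: eq_bigr => k _.
by rewrite mxE.
Qed.

Lemma tr_delta_mul n (i j : 'I_n) (X : 'M[C]_n) : \tr (delta_mx i j *m X) = X j i.
Proof.
rewrite /mxtrace (bigD1 i) //= big1 ?addr0.
  rewrite mxE (bigD1 j) //= big1 ?addr0; first by rewrite mxE !eqxx mul1r.
  by move=> k /negbTE nk; rewrite mxE nk andbF mul0r.
move=> k /negbTE nk; rewrite mxE big1 // => l _; rewrite mxE nk /=; by rewrite mul0r.
Qed.

End H.

Section H2.
Variable C : numClosedFieldType.

Lemma tr_psd n (rho : 'M[C]_n) (Z : 'M[C]_n) :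
  psd rho -> 0 <= \tr (rho *m (adjmx Z *m Z)).
Proof.
case=> _ Hpos.
rewrite mulmxA mxtrace_mulC /mxtrace; apply: sumr_ge0 => i _.
have := Hpos (adjmx (row i Z)); rewrite adjmxK.
rewrite [Z *m _]mulmxA.
suff -> : (row i Z *m rho *m adjmx (row i Z)) 0 0 = (Z *m rho *m adjmx Z) i i by [].
rewrite !mxE; apply: eq_bigr => k _.
by rewrite -row_mul !mxE.
Qed.

End H2.

Section H3.
Variable C : numClosedFieldType.

Lemma one_side dA dB (rho : 'M[C]_(dA * dB)) (X : 'M[C]_dA) (Y : 'M[C]_dB) c :
  psd rho -> \tr rho = 1 -> selfadj X -> observable Y -> 0 <= c ->
  0 <= \tr (rho *m ((X *m X) *t 1%:M)) + c ^+ 2 - 2 * c * \tr (rho *m (X *t Y)).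
Proof.
move=> Hrho Htr HX [HY HYY] c0.
set Z := X *t 1%:M - c *: (1%:M *t Y).
have HZ : adjmx Z = Z.
  by rewrite /Z adjmxD adjmxN adjmxZ !adjmx_tens HX HY !adjmx1 (geC0_conj c0).
have := tr_psd Z Hrho; rewrite HZ /Z.
rewrite mulmxBl !mulmxBr -!scalemxAl -!scalemxAr !tensmx_mul.
rewrite !mulmx1 !mul1mx HYY tens11 scalerA.
rewrite !raddfB /= !mxtraceZ mulmx1 Htr.
move=> H; apply: (le_trans H); rewrite le_eqVlt; apply/orP; left; apply/eqP.
ring.
Qed.

End H3.

Section H4.
Variable C : numClosedFieldType.

Lemma bound_term dA dB (rho : 'M[C]_(dA * dB)) (X : 'M[C]_dA) (Y : 'M[C]_dB) c :
  psd rho -> \tr rho = 1 -> selfadj X -> observable Y -> 0 <= c ->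
  2 * c * `|\tr (rho *m (X *t Y))| <= \tr (rho *m ((X *m X) *t 1%:M)) + c ^+ 2.
Proof.
move=> Hrho Htr HX [HY HYY] c0.
have HY' : observable (- Y).
  by split; [rewrite /selfadj adjmxN HY | rewrite mulmxN mulNmx opprK].
have w1 := one_side Hrho Htr HX (conj HY HYY) c0.
have w2 := one_side Hrho Htr HX HY' c0.
rewrite tensmxNr mulmxN raddfN /= mulrN opprK in w2.
set a := \tr (rho *m _) in w1 w2 *; set t := \tr (rho *m (X *t Y)) in w1 w2 *.
have E : 2 * c * t = ((a + c ^+ 2 + 2 * c * t) - (a + c ^+ 2 - 2 * c * t)) / 2.
  by field.
have Hreal : 2 * c * t \is Num.real.
  rewrite E; apply: rpredM; first by apply: rpredB; apply: ger0_real.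
  by apply: ger0_real; rewrite invr_ge0 ler0n.
rewrite -(ger0_norm (_ : 0 <= 2 * c)) ?mulr_ge0 // -normrM.
rewrite real_ler_norml //; apply/andP; split.
  by rewrite -subr_ge0 opprK addrC.
by rewrite -subr_ge0.
Qed.
End H4.

Definition flip N (y : 'I_N) (l : {ffun 'I_N -> bool}) : {ffun 'I_N -> bool} :=
  [ffun i => if i == y then ~~ l i else l i].

Lemma flipK N (y : 'I_N) : involutive (flip y).
Proof. by move=> l; apply/ffunP => i; rewrite !ffunE; case: (i == y) => //; rewrite negbK. Qed.

Lemma flip_inj N (y : 'I_N) : injective (flip y).
Proof. exact: inv_inj (@flipK N y). Qed.

Lemma firstbit0_flip N (y : 'I_N) l : nat_of_ord y != 0%N ->
  firstbit0 (flip y l) = firstbit0 l.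
Proof.
move=> Hy; apply: eq_forallb => i; rewrite ffunE.
case: (i =P y) => [->|//]; by rewrite (negbTE Hy).
Qed.

Section S.
Variable C : numClosedFieldType.

Lemma sgn_neg (b : bool) : (-1) ^+ (~~ b) = - ((-1) ^+ b : C).
Proof. by case: b; rewrite /= ?expr0 ?expr1 ?opprK. Qed.

Lemma sign_cross N (x x' : 'I_N) : x != x' ->
  \sum_(l | firstbit0 l) ((-1) ^+ l x * (-1) ^+ l x' : C) = 0.
Proof.
move=> Hxx'.
set y := if nat_of_ord x == 0%N then x' else x.
have Hy : nat_of_ord y != 0%N.
  rewrite /y; case: (nat_of_ord x =P 0%N) => [Hx|/eqP //]; apply/eqP => Hx'.
  by move/eqP: Hxx'; apply; apply: val_inj; rewrite /= Hx Hx'.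
set S := \sum_(l | _) _.
have HS : S = - S.
  rewrite {1}/S (reindex_inj (@flip_inj N y)) /= /S -sumrN.
  apply: eq_big => l; first by rewrite firstbit0_flip.
  move=> _; rewrite !ffunE /y.
  case: (nat_of_ord x =P 0%N) => _; rewrite eqxx; [rewrite (negbTE Hxx') | rewrite eq_sym (negbTE Hxx')];
    by rewrite sgn_neg ?mulNr ?mulrN ?opprK.
have : S + S = 0 by rewrite {1}HS addNr.
rewrite -mulr2n -mulr_natr => /eqP; rewrite mulf_eq0 pnatr_eq0 orbF => /eqP //.
Qed.

Lemma count_fb0 N : (0 < N)%N ->
  \sum_(l : {ffun 'I_N -> bool} | firstbit0 l) (1 : C) = (2 ^ (N - 1))%:R.
Proof.
case: N => // n _.
have P0 l : firstbit0 l = ~~ l ord0.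
  apply/forallP/idP => [H | H i]; first by have := H ord0.
  by apply/implyP => /eqP Hi; rewrite (_ : i = ord0) //; apply: val_inj.
have Hall : \sum_(l : {ffun 'I_n.+1 -> bool}) (1 : C) = (2 ^ n.+1)%:R.
  by rewrite sumr_const card_ffun card_bool card_ord.
rewrite (bigID (fun l => firstbit0 l)) /= in Hall.
have E : \sum_(l : {ffun 'I_n.+1 -> bool} | ~~ firstbit0 l) (1 : C) =
         \sum_(l : {ffun 'I_n.+1 -> bool} | firstbit0 l) 1.
  rewrite (reindex_inj (@flip_inj _ ord0)) /=.
  apply: eq_bigl => l; by rewrite !P0 ffunE eqxx negbK.
rewrite E expnS natrM in Hall.
rewrite subn1 /=.
set K := \sum_(l | _) _ in Hall *.
have -> : K = (K + K) / 2 by field.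
by rewrite Hall; field.
Qed.
End S.

Section S4.
Variable C : numClosedFieldType.

Definition Al N d (A : 'I_N -> 'M[C]_d) (l : {ffun 'I_N -> bool}) : 'M[C]_d :=
  \sum_(x < N) (-1) ^+ l x *: A x.

Lemma sum_to_tens N dA dB (rho : 'M[C]_(dA * dB)) (A : 'I_N -> 'M[C]_dA) (l : {ffun 'I_N -> bool})
    (B : 'M[C]_dB) :
  \sum_(x < N) (-1) ^+ l x * \tr (rho *m (A x *t B)) = \tr (rho *m (Al A l *t B)).
Proof.
rewrite /Al tensmx_suml mulmx_sumr raddf_sum; apply: eq_bigr => x _ /=.
by rewrite tensmxZl -scalemxAr mxtraceZ.
Qed.

Lemma conj_sgn (b : bool) : ((-1) ^+ b : C)^* = (-1) ^+ b.
Proof. by case: b; rewrite /= ?expr0 ?expr1 ?rmorphN1 ?conjC1. Qed.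

Lemma sgn_sq (b : bool) : ((-1) ^+ b * (-1) ^+ b : C) = 1.
Proof. by case: b; rewrite /= ?expr0 ?expr1 ?mulr1 ?mulrNN ?mulr1. Qed.

Lemma Al_selfadj N d (A : 'I_N -> 'M[C]_d) l :
  (forall x, selfadj (A x)) -> selfadj (Al A l).
Proof.
move=> HA; rewrite /selfadj /Al adjmx_sum; apply: eq_bigr => x _.
by rewrite adjmxZ conj_sgn HA.
Qed.

Lemma Al_sq N d (A : 'I_N -> 'M[C]_d) l :
  Al A l *m Al A l =
  \sum_(x < N) \sum_(x' < N) ((-1) ^+ l x * (-1) ^+ l x') *: (A x *m A x').
Proof.
rewrite /Al mulmx_suml; apply: eq_bigr => x _.
rewrite mulmx_sumr; apply: eq_bigr => x' _.
by rewrite -scalemxAl -scalemxAr scalerA.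
Qed.

Lemma sum_Al2 N d (A : 'I_N -> 'M[C]_d) : (0 < N)%N ->
  (forall x, A x *m A x = 1%:M) ->
  \sum_(l | firstbit0 l) Al A l *m Al A l = ((2 ^ (N - 1))%:R * N%:R) *: 1%:M.
Proof.
move=> N0 HA.
under eq_bigr => l _ do rewrite Al_sq.
rewrite exchange_big /=.
transitivity (\sum_(x < N) ((2 ^ (N - 1))%:R : C) *: (1%:M : 'M[C]_d)).
  apply: eq_bigr => x _; rewrite exchange_big /= [\sum_(x0 < N) _](bigD1 x) //= [X in _ + X]big1 ?addr0.
    by rewrite -scaler_suml (eq_bigr (fun _ => 1)) ?count_fb0 ?HA // => l _; rewrite sgn_sq.
  move=> x' Hx'; rewrite -scaler_suml sign_cross ?scale0r //.
  by rewrite eq_sym.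
by rewrite sumr_const card_ord -scaler_nat scalerA mulrC.
Qed.

End S4.

Lemma upper (C : numClosedFieldType) (N : nat) (eta : C) :
  (1 <= N)%N -> 0 <= eta <= 1 ->
  (forall (dA dB : nat) (rho : 'M[C]_(dA * dB)) (A : 'I_N -> 'M[C]_dA)
          (B : {ffun 'I_N -> bool} -> 'M[C]_dB),
      density rho ->
      (forall x, observable (A x)) ->
      (forall l, firstbit0 l -> observable (B l)) ->
      BNQ eta rho A B <= eta * (2 ^ (N - 1))%:R * sqrtC N%:R).
Proof.
move=> N0 /andP[eta0 _] dA dB rho A B [Hpsd Htr] HA HB.
set c := sqrtC (N%:R : C).
set K := ((2 ^ (N - 1))%:R : C).
have c0 : 0 < c by rewrite sqrtC_gt0 ltr0n.
have c2 : c ^+ 2 = N%:R by rewrite sqrtCK.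
rewrite /BNQ -mulrA ler_wpM2l //.
under eq_bigr => l _ do rewrite sum_to_tens.
have H1 : \sum_(l | firstbit0 l) 2 * c * `|\tr (rho *m (Al A l *t B l))|
   <= \sum_(l | firstbit0 l) (\tr (rho *m ((Al A l *m Al A l) *t 1%:M)) + c ^+ 2).
  apply: ler_sum => l Hl; apply: bound_term => //.
  - by apply: Al_selfadj => x; case: (HA x).
  - exact: HB.
  - exact: ltW.
rewrite -mulr_sumr big_split /= in H1.
rewrite -raddf_sum /= -mulmx_sumr -tensmx_suml sum_Al2 // in H1; last by move=> x; case: (HA x).
rewrite tensmxZl tens11 -scalemxAr mxtraceZ mulmx1 Htr mulr1 in H1.
have E : \sum_(i : {ffun 'I_N -> bool} | firstbit0 i) c ^+ 2 = K * c ^+ 2.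
  rewrite /K -(@count_fb0 C N N0) mulr_suml.
  by apply: eq_bigr => i _; rewrite mul1r.
rewrite E -/K in H1.
rewrite -(ler_pM2l (_ : 0 < 2 * c)) ?mulr_gt0 //.
apply: (le_trans H1); rewrite -c2 le_eqVlt; apply/orP; left; apply/eqP.
rewrite -mulr_natr; ring.
Qed.

Fixpoint dimk k : nat := if k is k'.+1 then (dimk k' * 2)%N else 1%N.

Lemma dimk_gt0 k : (0 < dimk k)%N.
Proof. by elim: k => //= k IH; rewrite muln_gt0 IH. Qed.

Section S6.
Variable C : numClosedFieldType.

Definition Xm : 'M[C]_2 := \matrix_(i, j) (i != j)%:R.
Definition Zm : 'M[C]_2 :=
  \matrix_(i, j) ((i == j)%:R * (if nat_of_ord i == 0%N then 1 else -1)).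

Ltac m2 := apply/matrixP => -[[|[|?]] ?] -[[|[|?]] ?] //;
  rewrite !mxE ?big_ord_recl ?big_ord0 /= ?mxE /=;
  rewrite /= ?mulr1 ?mulr0 ?mul0r ?mul1r ?add0r ?addr0 ?oppr0 ?mulrN1 ?mulN1r ?opprK ?conjC1 ?conjC0 ?rmorphN1 ?oppr0 ?mulN1r ?opprK //.

Lemma XX : Xm *m Xm = 1%:M. Proof. m2. Qed.
Lemma ZZ : Zm *m Zm = 1%:M. Proof. m2. Qed.
Lemma XZ : Xm *m Zm = - (Zm *m Xm). Proof. m2. Qed.
Lemma adjX : adjmx Xm = Xm. Proof. m2. Qed.
Lemma adjZ : adjmx Zm = Zm. Proof. m2. Qed.
Lemma trX : Xm^T = Xm. Proof. m2. Qed.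
Lemma trZ : Zm^T = Zm. Proof. m2. Qed.

End S6.

Section Fam.
Variable C : numClosedFieldType.

Fixpoint fam k : 'I_k -> 'M[C]_(dimk k) :=
  match k return 'I_k -> 'M[C]_(dimk k) with
  | 0 => fun _ => 1%:M
  | k'.+1 => fun i => match unlift ord_max i with
                      | Some j => fam j *t Xm C
                      | None => 1%:M *t Zm C
                      end
  end.

Lemma famS_lift k (j : 'I_k) : fam (lift ord_max j) = fam j *t Xm C.
Proof. by rewrite /= liftK. Qed.

Lemma famS_max k : fam (@ord_max k) = 1%:M *t Zm C.
Proof. by rewrite /= unlift_none. Qed.

Lemma fam_sq k (i : 'I_k) : fam i *m fam i = 1%:M.
Proof.
elim: k i => [[]//|k IH] i.
case: (unliftP ord_max i) => [j ->|->].
  by rewrite famS_lift tensmx_mul IH XX tens11.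
by rewrite famS_max tensmx_mul mulmx1 ZZ tens11.
Qed.

Lemma fam_adj k (i : 'I_k) : adjmx (fam i) = fam i.
Proof.
elim: k i => [[]//|k IH] i.
case: (unliftP ord_max i) => [j ->|->].
  by rewrite famS_lift adjmx_tens IH adjX.
by rewrite famS_max adjmx_tens adjmx1 adjZ.
Qed.

Lemma fam_tr k (i : 'I_k) : (fam i)^T = fam i.
Proof.
elim: k i => [[]//|k IH] i.
case: (unliftP ord_max i) => [j ->|->].
  by rewrite famS_lift trmx_tens IH trX.
by rewrite famS_max trmx_tens trmx1 trZ.
Qed.

Lemma fam_anti k (i i' : 'I_k) : i != i' -> fam i *m fam i' = - (fam i' *m fam i).
Proof.
elim: k i i' => [[]//|k IH] i i'.
case: (unliftP ord_max i) => [j ->|->]; case: (unliftP ord_max i') => [j' ->|->].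
- rewrite (inj_eq (@lift_inj _ _)) => /IH H.
  by rewrite !famS_lift !tensmx_mul H XX tensmxNl.
- move=> _; rewrite famS_lift famS_max !tensmx_mul mulmx1 mul1mx XZ tensmxNr //.
- move=> _; rewrite famS_lift famS_max !tensmx_mul mulmx1 mul1mx XZ tensmxNr opprK //.
- by rewrite eqxx.
Qed.

End Fam.

Section S7.
Variable C : numClosedFieldType.

Lemma adjmx_delta m n (i : 'I_m) (j : 'I_n) :
  adjmx (delta_mx i j : 'M[C]_(m, n)) = delta_mx j i.
Proof. by rewrite /adjmx trmx_delta; apply/matrixP => a b; rewrite !mxE; case: (_ && _); rewrite ?conjC1 ?conjC0. Qed.

Definition wv d : 'M[C]_(d * d, 1 * 1) := \sum_(i < d) (delta_mx i 0 *t delta_mx i 0).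

Definition rhoE d : 'M[C]_(d * d) := (d%:R)^-1 *: (wv d *m adjmx (wv d)).

Lemma wwE d : wv d *m adjmx (wv d) =
  \sum_(i < d) \sum_(j < d) (delta_mx i j *t delta_mx i j).
Proof.
rewrite /wv adjmx_sum mulmx_suml; apply: eq_bigr => i _.
rewrite mulmx_sumr; apply: eq_bigr => j _.
by rewrite adjmx_tens adjmx_delta tensmx_mul !mul_delta_mx.
Qed.

Lemma tr_rhoE d (X Y : 'M[C]_d) :
  \tr (rhoE d *m (X *t Y)) = (d%:R)^-1 * \sum_(i < d) \sum_(j < d) X j i * Y j i.
Proof.
rewrite /rhoE -scalemxAl mxtraceZ wwE mulmx_suml raddf_sum; congr (_ * _).
apply: eq_bigr => i _; rewrite mulmx_suml raddf_sum; apply: eq_bigr => j _ /=.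
by rewrite tensmx_mul mxtrace_tens !tr_delta_mul.
Qed.

Lemma rhoE_density d : (0 < d)%N -> density (rhoE d).
Proof.
move=> d0.
have dinv : 0 <= (d%:R : C)^-1 by rewrite invr_ge0 ler0n.
split; last first.
  have := tr_rhoE (1%:M : 'M[C]_d) 1%:M; rewrite tens11 mulmx1 => ->.
  rewrite (eq_bigr (fun _ => 1)).
    by rewrite sumr_const card_ord mulVf // pnatr_eq0 -lt0n.
  move=> i _; rewrite (bigD1 i) //= big1 ?addr0; first by rewrite !mxE eqxx mulr1.
  by move=> j /negbTE Hj; rewrite !mxE Hj mul0r.
split.
  by rewrite /selfadj /rhoE adjmxZ adjmxM adjmxK (geC0_conj dinv).
move=> v; rewrite /rhoE -scalemxAr -scalemxAl mxE mulr_ge0 //.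
rewrite (mulmxA (adjmx v)) -(mulmxA (adjmx v *m wv d)).
set u := adjmx v *m wv d.
have -> : adjmx (wv d) *m v = adjmx u by rewrite /u adjmxM adjmxK.
rewrite mxE big_ord1 !mxE mul_conjC_ge0 //.
Qed.

End S7.

Section S8.
Variable C : numClosedFieldType.

Lemma fam_ac N (x x' : 'I_N) :
  fam C x *m fam C x' + fam C x' *m fam C x = (2 * (x == x')%:R) *: 1%:M.
Proof.
case: (x =P x') => [<-|/eqP H].
  by rewrite fam_sq mulr1 scaler_nat mulr2n.
by rewrite fam_anti // addNr mulr0 scale0r.
Qed.

Lemma Al_sqN N d (A : 'I_N -> 'M[C]_d) l :
  (forall x x', A x *m A x' + A x' *m A x = (2 * (x == x')%:R) *: 1%:M) ->
  Al A l *m Al A l = N%:R *: 1%:M.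
Proof.
move=> H.
set T := Al A l *m Al A l.
have E2 : T + T = (2 * N%:R) *: 1%:M.
  rewrite {1}/T Al_sq {1}exchange_big /T Al_sq -big_split /=.
  transitivity (\sum_(x < N) (2 : C) *: (1%:M : 'M[C]_d)); last first.
    by rewrite sumr_const card_ord -scaler_nat scalerA mulrC.
  apply: eq_bigr => x _; rewrite -big_split /=.
  rewrite (eq_bigr (fun x' => ((-1) ^+ l x * (-1) ^+ l x' * (2 * (x == x')%:R)) *: (1%:M : 'M[C]_d))); last first.
    by move=> x' _; rewrite [(-1) ^+ l x' * _]mulrC -scalerDr H scalerA eq_sym.
  rewrite (bigD1 x) //= [X in _ + X]big1 ?addr0.
    by rewrite eqxx mulr1 sgn_sq mul1r.
  by move=> x' /negbTE Hx; rewrite eq_sym Hx mulr0 mulr0 scale0r.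
have : T = (2 : C)^-1 *: (T + T).
  by rewrite -mulr2n -scaler_nat scalerA mulVf ?scale1r // pnatr_eq0.
rewrite E2 scalerA mulrA mulVf ?mul1r // pnatr_eq0 //.
Qed.

End S8.

Lemma lower (C : numClosedFieldType) (N : nat) (eta : C) :
  (1 <= N)%N ->
  (exists (dA dB : nat) (rho : 'M[C]_(dA * dB)) (A : 'I_N -> 'M[C]_dA)
          (B : {ffun 'I_N -> bool} -> 'M[C]_dB),
      [/\ density rho,
          (forall x, observable (A x)),
          (forall l, firstbit0 l -> observable (B l)),
          (forall x x' : 'I_N,
              A x *m A x' + A x' *m A x = (2 * (x == x')%:R) *: 1%:M) &
          BNQ eta rho A B = eta * (2 ^ (N - 1))%:R * sqrtC N%:R]).
Proof.
move=> N0.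
set d := dimk N.
set c := sqrtC (N%:R : C).
have c0 : 0 < c by rewrite sqrtC_gt0 ltr0n.
have cn0 : c != 0 by rewrite gt_eqF.
have c2 : c ^+ 2 = N%:R by rewrite sqrtCK.
have d0 : (d%:R : C) != 0 by rewrite pnatr_eq0 -lt0n dimk_gt0.
set A := @fam C N.
have HAc := @fam_ac C N.
have HAl : forall l, Al A l *m Al A l = N%:R *: 1%:M by move=> l; apply: Al_sqN.
have HsA : forall l, selfadj (Al A l) by move=> l; apply: Al_selfadj => x; exact: fam_adj.
exists d, d, (rhoE C d), A, (fun l => c^-1 *: Al A l); split.
- exact: rhoE_density (dimk_gt0 N).
- by move=> x; split; [exact: fam_adj | exact: fam_sq].
- move=> l _; split.
    rewrite /selfadj adjmxZ geC0_conj ?invr_ge0 ?ltW //.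
    by rewrite (HsA l).
  rewrite -scalemxAl -scalemxAr HAl !scalerA -c2.
  rewrite (_ : c^-1 / c * c ^+ 2 = 1) ?scale1r //; field; exact: cn0.
- exact: HAc.
have Ht : forall l, \tr (rhoE C d *m (Al A l *t (c^-1 *: Al A l))) = c.
  move=> l; rewrite tr_rhoE.
  have Htr : (Al A l)^T = Al A l.
    apply/matrixP => i j; rewrite mxE /Al !summxE; apply: eq_bigr => x _.
    by rewrite !mxE /A -[in RHS]fam_tr mxE.
  transitivity ((d%:R)^-1 * c^-1 * \tr ((Al A l)^T *m Al A l)).
    rewrite -mulrA; congr (_ * _); rewrite /mxtrace mulr_sumr; apply: eq_bigr => i _.
    rewrite !mxE mulr_sumr; apply: eq_bigr => j _; rewrite !mxE; ring.
  rewrite Htr HAl mxtraceZ mxtrace1 -c2; field; by rewrite d0 cn0.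
rewrite /BNQ -mulrA; congr (_ * _).
under eq_bigr => l _ do rewrite sum_to_tens Ht (gtr0_norm c0).
rewrite -(@count_fb0 C N N0) mulr_suml.
by apply: eq_bigr => l _; rewrite mul1r.
Qed.

End Helpers.

Theorem mainTheorem5 (C : numClosedFieldType) (N : nat) (eta : C) :
  (1 <= N)%N -> 0 <= eta <= 1 ->
  (forall (dA dB : nat) (rho : 'M[C]_(dA * dB)) (A : 'I_N -> 'M[C]_dA)
          (B : {ffun 'I_N -> bool} -> 'M[C]_dB),
      density rho ->
      (forall x, observable (A x)) ->
      (forall l, firstbit0 l -> observable (B l)) ->
      BNQ eta rho A B <= eta * (2 ^ (N - 1))%:R * sqrtC N%:R)
  /\
  (exists (dA dB : nat) (rho : 'M[C]_(dA * dB)) (A : 'I_N -> 'M[C]_dA)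
          (B : {ffun 'I_N -> bool} -> 'M[C]_dB),
      [/\ density rho,
          (forall x, observable (A x)),
          (forall l, firstbit0 l -> observable (B l)),
          (forall x x' : 'I_N,
              A x *m A x' + A x' *m A x = (2 * (x == x')%:R) *: 1%:M) &
          BNQ eta rho A B = eta * (2 ^ (N - 1))%:R * sqrtC N%:R]).
Proof.
move=> N0 Heta; split.
  exact: Helpers.upper.
exact: Helpers.lower.
Qed.
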